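(* Let $r\ge 1$ and let $m_1,\dots,m_r,n$ be positive integers with $m=\sum_{i=1}^r m_i\le n$. Let $$h=\max\Big\{k\in\mathbb{Z},\ k\ge 2:\ \frac{m_i n}{k-1}\ge \Big\lceil \frac{m_i n}{k}\Big\rceil \text{ for all } i\in[r]\Big\}.$$ Then $$\chi_{=}(K_{m_1,\dots,m_r}\times K_n)=\sum_{i=1}^r\Big\lceil \frac{m_i n}{h}\Big\rceil .$$
   Context: All graphs are finite, simple and undirected; $[k]=\{1,\dots,k\}$. A (proper) $k$-coloring of $G$ is a map $f:V(G)\to[k]$ with $f(x)\ne f(y)$ whenever $xy\in E(G)$; its color classes are the sets $f^{-1}(i)$. An equitable $k$-coloring is a $k$-coloring in which any two color classes differ in size by at most $1$ (equivalently each class has size $\lfloor |V(G)|/k\rfloor$ or $\lceil |V(G)|/k\rceil$); $G$ is equitably $k$-colorable if it has one. The equitable chromatic number $\chi_{=}(G)$ is the minimum $k$ such that $G$ is equitably $k$-colorable. $K_{m_1,\dots,m_r}$ denotes the complete multipartite graph with parts of sizes $m_1,\dots,m_r$, and $K_n$ the complete graph on $n$ vertices. The Kronecker product $G\times H$ has vertex set $V(G)\times V(H)$, with $(x,y)$ adjacent to $(x',y')$ iff $xx'\in E(G)$ and $yy'\in E(H)$. *)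

(* Defs.v *)
(* Simple graphs = symmetric irreflexive boolean relations on a finType. *)
From mathcomp Require Import all_boot.
Set Implicit Arguments. Unset Strict Implicit. Unset Printing Implicit Defensive.

Definition proper_coloring (T : finType) (e : rel T) (k : nat) (f : T -> 'I_k) : Prop :=
  forall x y, e x y -> f x != f y.

Definition equitable_sizes (T : finType) (k : nat) (f : T -> 'I_k) : Prop :=
  forall i j : 'I_k, #|[set x | f x == i]| <= #|[set x | f x == j]| + 1.

Definition equitably_colorable (T : finType) (e : rel T) (k : nat) : Prop :=
  exists f : T -> 'I_k, proper_coloring e f /\ equitable_sizes f.

Definition is_eq_chromatic_number (T : finType) (e : rel T) (k : nat) : Prop :=
  equitably_colorable e k /\ forall k', equitably_colorable e k' -> k <= k'.

Definition complete_rel (n : nat) : rel 'I_n := fun x y => x != y.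

Definition multipartite_vertex (r : nat) (m : 'I_r -> nat) : finType :=
  {i : 'I_r & 'I_(m i)}.

Definition multipartite_rel (r : nat) (m : 'I_r -> nat) : rel (multipartite_vertex m) :=
  fun x y => tag x != tag y.

Definition kron_rel (T1 T2 : finType) (e1 : rel T1) (e2 : rel T2) : rel (T1 * T2) :=
  fun x y => e1 x.1 y.1 && e2 x.2 y.2.

Definition ceil_div (a k : nat) : nat := (a + k.-1) %/ k.

(* condition on k >= 2: m_i n / (k-1) >= ceil(m_i n / k) for all i,
   cleared of the (positive) denominator k-1 *)
Definition h_cond (r : nat) (m : 'I_r -> nat) (n k : nat) : Prop :=
  forall i : 'I_r, (k - 1) * ceil_div (m i * n) k <= m i * n.

Definition is_h (r : nat) (m : 'I_r -> nat) (n h : nat) : Prop :=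
  2 <= h /\ h_cond m n h /\ forall k, 2 <= k -> h_cond m n k -> k <= h.

(* Main.v *)
Require Import Defs.
From mathcomp Require Import all_boot zify.

Lemma step_count a c j : 0 < c -> j < c ->
  a.+1 %/ c + (j < a.+1 %% c) = a %/ c + (j < a %% c) + (a %% c == j).
Proof.
move=> c0 jc.
have rc : a %% c < c by rewrite ltn_pmod.
have ea := divn_eq a c.
set q := a %/ c in ea *; set r := a %% c in ea rc *.
have [rc1|rc1] := ltnP r.+1 c.
  have -> : a.+1 = q * c + r.+1 by rewrite ea addnS.
  rewrite divnMDl // modnMDl divn_small // modn_small // addn0.
  by rewrite ltnS leq_eqVlt; case: (ltngtP j r) => //= H; lia.
have rE : r = c.-1 by lia.
have -> : a.+1 = q.+1 * c + 0 by rewrite ea rE mulSn; lia.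
rewrite divnMDl // modnMDl div0n mod0n addn0 /= rE.
by case: (ltngtP j c.-1) => H; lia.
Qed.

Lemma equi_split (T : finType) (c : nat) : 0 < c -> forall (A : {set T}),
  exists g : {ffun T -> 'I_c}, forall j : 'I_c,
    #|[set x in A | g x == j]| = #|A| %/ c + (j < #|A| %% c).
Proof.
move=> c0.
have d0 : 0 < c by [].
suff H : forall a (A : {set T}), #|A| = a -> exists g : {ffun T -> 'I_c}, forall j : 'I_c,
    #|[set x in A | g x == j]| = a %/ c + (j < a %% c).
  by move=> A; apply: H.
elim=> [|a IH] A Ha.
  exists [ffun _ => Ordinal c0] => j.
  rewrite div0n mod0n addn0; apply/eqP; rewrite cards_eq0; apply/eqP/setP=> x.
  rewrite !inE; have : x \notin A by apply/negP => xA; move: Ha; rewrite (cardD1 x) xA.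
  by move/negbTE ->.
have : 0 < #|A| by rewrite Ha.
case/card_gt0P => x0 x0A.
have Ha' : #|A :\ x0| = a by move: Ha; rewrite (cardsD1 x0) x0A add1n => [[]].
have [g' Hg'] := IH _ Ha'.
pose j0 : 'I_c := Ordinal (ltn_pmod a c0).
exists [ffun x => if x == x0 then j0 else g' x] => j.
rewrite (cardsD1 x0) !inE x0A /= ffunE eqxx.
have -> : [set x in A | [ffun x => if x == x0 then j0 else g' x] x == j] :\ x0
        = [set x in A :\ x0 | g' x == j].
  apply/setP => x; rewrite !inE ffunE; case: (x == x0) => //=.
rewrite Hg' step_count // addnC; congr (_ + _).
Qed.

Lemma ceil_le a h c : 0 < h -> a <= c * h -> ceil_div a h <= c.
Proof. move=> h0 H; rewrite /ceil_div -ltnS ltn_divLR //; lia. Qed.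

Lemma ceil_ge a h : 0 < h -> a <= ceil_div a h * h.
Proof.
move=> h0; rewrite /ceil_div.
have := divn_eq (a + h.-1) h; have := ltn_pmod (a + h.-1) h0; lia.
Qed.

Lemma ceil_pos a h : 0 < h -> 0 < a -> 0 < ceil_div a h.
Proof. move=> h0 a0; rewrite /ceil_div divn_gt0 //; lia. Qed.

Lemma class_bound a h c0 (j : nat) : 0 < a -> 2 <= h -> (h - 1) * c0 <= a -> c0 = ceil_div a h ->
  h - 1 <= a %/ c0 + (j < a %% c0) <= h.
Proof.
move=> a0 h2 H1 E; rewrite E in H1 *; set c := ceil_div a h in H1 *.
have cpos : 0 < c by apply: ceil_pos; lia.
have H2 : a <= c * h by apply: ceil_ge; lia.
have ea := divn_eq a c; have rc := ltn_pmod a cpos.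
set q := a %/ c in ea *; set r := a %% c in ea rc *.
have q1 : h - 1 <= q.
  rewrite /q leq_divRL //; lia.
apply/andP; split; first by lia.
case: (ltnP j r) => jr /=.
  have : q < h.
    rewrite /q ltn_divLR // ltn_neqAle mulnC H2 andbT; apply/eqP => E'.
    by move: jr; rewrite /r E' ?modnMl ?modnMr.
  lia.
have : q < h.+1 by rewrite /q ltn_divLR //; nia.
lia.
Qed.

Lemma card_mv (r : nat) (m : 'I_r -> nat) : #|multipartite_vertex m| = \sum_(i < r) m i.
Proof.
rewrite /multipartite_vertex card_tagged sumnE big_map big_enum /=.
by apply: eq_bigr => i _; rewrite card_ord.
Qed.

Lemma card_part (r : nat) (m : 'I_r -> nat) (n : nat) (i : 'I_r) :
  #|[set v : (multipartite_vertex m * 'I_n)%type | tag v.1 == i]| = m i * n.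
Proof.
have -> : [set v : (multipartite_vertex m * 'I_n)%type | tag v.1 == i]
   = setX [set u : multipartite_vertex m | tag u == i] setT.
  by apply/setP => v; rewrite !inE andbT.
rewrite cardsX cardsT card_ord; congr (_ * _).
have -> : [set u : multipartite_vertex m | tag u == i]
     = [set (Tagged (fun i => 'I_(m i)) a) | a : 'I_(m i)].
  apply/setP => u; rewrite !inE; apply/idP/imsetP.
    by case: u => i' a /= /eqP E; subst i'; exists a.
  by case=> a _ ->.
rewrite card_imset ?card_ord //.
by move=> a b; apply: eq_from_Tagged.
Qed.

Lemma card_col (r : nat) (m : 'I_r -> nat) (n : nat) (x : 'I_n) :
  #|[set v : (multipartite_vertex m * 'I_n)%type | v.2 == x]| = \sum_(i < r) m i.
Proof.
have -> : [set v : (multipartite_vertex m * 'I_n)%type | v.2 == x]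
   = setX setT [set x].
  by apply/setP => v; rewrite !inE.
by rewrite cardsX cardsT cards1 muln1 card_mv.
Qed.

Lemma upper (r : nat) (m : 'I_r -> nat) (n h : nat) :
  (forall i, 0 < m i) -> 0 < n -> is_h m n h ->
  equitably_colorable (kron_rel (@multipartite_rel r m) (@complete_rel n))
    (\sum_(i < r) ceil_div (m i * n) h).
Proof.
move=> m0 n0 [h2 [hc _]].
set T := (multipartite_vertex m * 'I_n)%type.
pose P (i : 'I_r) : {set T} := [set v : T | tag v.1 == i].
pose c (i : 'I_r) := ceil_div (m i * n) h.
have c0 i : 0 < c i by apply: ceil_pos; [lia | rewrite muln_gt0 m0].
have [g Hg] : exists g : forall i, {ffun T -> 'I_(c i)}, forall i (j : 'I_(c i)),
    #|[set x in P i | g i x == j]| = #|P i| %/ c i + (j < #|P i| %% c i).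
  exact (@fin_all_exists _ (fun i => {ffun T -> 'I_(c i)}) (fun i gi => forall j : 'I_(c i), #|[set x in P i | gi x == j]| = #|P i| %/ c i + (j < #|P i| %% c i)) (fun i => @equi_split T (c i) (c0 i) (P i))).
pose D := {i : 'I_r & 'I_(c i)}.
have HK : #|{: D}| = \sum_(i < r) c i.
  rewrite card_tagged sumnE big_map big_enum /=.
  by apply: eq_bigr => i _; rewrite card_ord.
pose d (v : T) : D := Tagged (fun i => 'I_(c i)) (g (tag v.1) v).
exists (fun v => cast_ord HK (enum_rank (d v))); split.
  move=> v w; rewrite /kron_rel /multipartite_rel /= => /andP [ne _].
  apply/negP => /eqP E.
  have := congr1 (fun x => tag (enum_val (cast_ord (esym HK) x))) E.
  rewrite /= !cast_ordK !enum_rankK /d /= => E'.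
  by move: ne; rewrite E' eqxx.
have cls col : exists i (j : 'I_(c i)),
    [set v | cast_ord HK (enum_rank (d v)) == col] = [set x in P i | g i x == j].
  case E : (enum_val (cast_ord (esym HK) col)) => [i j].
  exists i, j; apply/setP => v; rewrite !inE.
  rewrite -(inj_eq (@cast_ord_inj _ _ (esym HK))) cast_ordK.
  rewrite -(inj_eq enum_val_inj) enum_rankK E /d.
  move: (tag v.1) => i'.
  case: (eqVneq i' i) => [->|ne]; first by rewrite eq_Tagged.
  apply/negbTE/negP => /eqP E'.
  by move: (congr1 tag E') ne => /= ->; rewrite eqxx.
have bnd col : h - 1 <= #|[set v | cast_ord HK (enum_rank (d v)) == col]| <= h.
  have [i [j ->]] := cls col.
  rewrite Hg card_part; apply: class_bound => //.
  - by rewrite muln_gt0 m0.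
  - by have := hc i; rewrite subn1.
move=> i j.
have := bnd i; have := bnd j; move=> /andP [Hj1 Hj2] /andP [Hi1 Hi2].
apply: (leq_trans Hi2); apply: (leq_trans _ (leq_add Hj1 (leqnn 1))); lia.
Qed.

Lemma lower (r : nat) (m : 'I_r -> nat) (n h : nat) :
  1 <= r -> (forall i, 0 < m i) -> 0 < n -> \sum_(i < r) m i <= n -> is_h m n h ->
  forall k, equitably_colorable (kron_rel (@multipartite_rel r m) (@complete_rel n)) k ->
  \sum_(i < r) ceil_div (m i * n) h <= k.
Proof.
move=> r0 m0 n0 mn [h2 [hc hmax]] k [f [prop equi]].
set msum := \sum_(i < r) m i in mn *.
pose i0 : 'I_r := Ordinal r0.
have msum0 : m i0 <= msum by rewrite /msum (bigD1 i0) //= leq_addr.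
have m0' := m0 i0.
have hn : n < h.
  apply: hmax; first by lia.
  move=> i; rewrite /= ?addn1 subn1 /= [X in _ <= X]mulnC leq_mul2l; apply/orP; right.
  by apply: ceil_le => //; nia.
have Km : \sum_(i < r) ceil_div (m i * n) h <= msum.
  apply: leq_sum => i _; apply: ceil_le; first by lia.
  by rewrite leq_mul2l ltnW ?orbT.
pose v0 : (multipartite_vertex m * 'I_n)%type := (Tagged (fun i => 'I_(m i)) (Ordinal (m0 i0)), Ordinal n0).
have k0 : 0 < k by have := ltn_ord (f v0); lia.
pose C (j : 'I_k) := [set v | f v == j].
have [jm _ Hjm] := arg_maxnP (fun j => #|C j|) (isT : predT (Ordinal k0)).
set M := #|C jm| in Hjm.
have HM' j : M <= #|C j| + 1 by apply: equi.
have cardT : #|{: (multipartite_vertex m * 'I_n)}| = msum * n by rewrite card_prod card_mv card_ord.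
have tot : #|{: (multipartite_vertex m * 'I_n)}| = \sum_(j < k) #|C j|.
  rewrite -sum1_card (partition_big (fun v => f v) predT) //=.
  apply: eq_bigr => j _; rewrite -sum1_card; apply: eq_bigl => v; by rewrite !inE.
have totM : #|{: (multipartite_vertex m * 'I_n)}| <= k * M.
  rewrite tot -[k in k * M]card_ord -sum_nat_const; apply: leq_sum => j _.
  exact: Hjm.
case: (leqP M msum.+1) => HMs.
  have : msum <= k by nia.
  lia.
have pure v w : f v = f w -> tag v.1 = tag w.1.
  move=> E; apply/eqP; apply/negPn/negP => ne.
  have c2 : v.2 = w.2.
    apply/eqP; apply/negPn/negP => ne2.
    by have := prop v w; rewrite /kron_rel /multipartite_rel /complete_rel /= ne ne2 E eqxx => /(_ isT).
  have sub : C (f v) \subset [set u : (multipartite_vertex m * 'I_n)%type | u.2 == v.2].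
    apply/subsetP => u; rewrite !inE => /eqP Eu.
    apply/negPn/negP => ne3.
    have t1 : tag u.1 = tag v.1.
      apply/eqP/negPn/negP => ne4.
      by have := prop u v; rewrite /kron_rel /multipartite_rel /complete_rel /= ne4 ne3 Eu eqxx => /(_ isT).
    have t2 : tag u.1 = tag w.1.
      apply/eqP/negPn/negP => ne4.
      by have := prop u w; rewrite /kron_rel /multipartite_rel /complete_rel /= ne4 -c2 ne3 Eu E eqxx => /(_ isT).
    by move: ne; rewrite -t1 -t2 eqxx.
  have := subset_leq_card sub; rewrite card_col -/msum => Hc.
  have := HM' (f v); lia.
pose P (i : 'I_r) : {set (multipartite_vertex m * 'I_n)%type} := [set v : (multipartite_vertex m * 'I_n)%type | tag v.1 == i].
pose F (i : 'I_r) : {set 'I_k} := f @: P i.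
have Hpart i : m i * n = \sum_(col in F i) #|C col|.
  rewrite -(@card_part r m n i) -sum1_card (partition_big (fun v => f v) (mem (F i))) /=; last first.
    by move=> v vP; apply: imset_f.
  apply: eq_bigr => col /imsetP [w wP ->]; rewrite -sum1_card; apply: eq_bigl => v.
  rewrite !inE; case E: (f v == f w); rewrite ?andbF // andbT.
  by move: wP; rewrite !inE (pure _ _ (eqP E)).
have Hbnd i : (M - 1) * #|F i| <= m i * n <= M * #|F i|.
  rewrite Hpart; apply/andP; split.
    rewrite mulnC -sum_nat_const; apply: leq_sum => j _; have := HM' j; lia.
  rewrite mulnC -sum_nat_const; apply: leq_sum => j _; exact: Hjm.
have disj : \sum_(i < r) #|F i| <= k.
  have -> : \sum_(i < r) #|F i| = \sum_(i < r) \sum_(col < k) (col \in F i : nat).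
    apply: eq_bigr => i _; rewrite -sum1_card big_mkcond /=.
    by apply: eq_bigr => col _; case: (col \in F i).
  rewrite exchange_big /= -[k in _ <= k]card_ord -sum1_card.
  apply: leq_sum => col _.
  case: (pickP (fun i => col \in F i)) => [j Hj | none]; last first.
    by rewrite big1 // => i _; rewrite none.
  rewrite (bigD1 j) //= big1 ?addn0 ?leq_b1 // => i ne.
  apply/eqP; rewrite eqb0; apply/negP => Hi.
  move: Hj Hi => /imsetP [w wP ->] /imsetP [u uP E].
  move: wP uP; rewrite !inE (pure _ _ E) => /eqP -> /eqP E'.
  by move: ne; rewrite E' eqxx.
have Hc i : ceil_div (m i * n) h <= #|F i|.
  case: (leqP M h) => HMh.
    apply: ceil_le; first by lia.
    have := Hbnd i; move/andP => [_ H]; apply: (leq_trans H); rewrite mulnC leq_mul2l HMh orbT //.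
  exfalso.
  have : M <= h.
    apply: hmax; first by lia.
    move=> i'; have := Hbnd i'; move/andP => [H1 H2].
    apply: leq_trans _ H1; rewrite leq_mul2l; apply/orP; right.
    by apply: ceil_le; [lia | nia].
  lia.
apply: leq_trans disj; apply: leq_sum => i _; exact: Hc.
Qed.

Theorem theorem3p1 (r : nat) (m : 'I_r -> nat) (n h : nat) :
  1 <= r ->
  (forall i, 0 < m i) ->
  0 < n ->
  \sum_(i < r) m i <= n ->
  is_h m n h ->
  is_eq_chromatic_number (kron_rel (@multipartite_rel r m) (@complete_rel n))
    (\sum_(i < r) ceil_div (m i * n) h).
Proof.
move=> r0 m0 n0 mn hh; split; first exact: upper.
exact: lower.
Qed.
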